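(* Let $P$ be a finite poset, $R$ a commutative unital ring, and $D$ a derivation of $I^3(P,R)$. Then for all $x<z<y$ in $P$, $D(e_{xzy})=0$.
   Context: For a finite poset $P$, $P^3_\le=\{(x,y,z)\in P^3: x\le y\le z\}$, and $I^3(P,R)$ is the $R$-module of functions $f:P^3_\le\to R$ with multiplication $(fg)(x_1,x_2,x_3)=\sum f(x_1,y_1,y_2)g(y_1,y_2,x_3)$ over all $x_1\le y_1\le x_2\le y_2\le x_3$. For $x\le y\le z$, $e_{xyz}$ is the function equal to $1$ at $(x,y,z)$ and $0$ elsewhere. A derivation is an $R$-linear map $D:I^3(P,R)\to I^3(P,R)$ with $D(fg)=D(f)g+fD(g)$. *)

(* Defs.v *)
From HB Require Import structures.
From mathcomp Require Import all_boot all_order all_algebra.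
Set Implicit Arguments. Unset Strict Implicit. Unset Printing Implicit Defensive.
Import Order.TTheory GRing.Theory.
Local Open Scope order_scope.
Local Open Scope ring_scope.

Section I3.
Variables (d : Order.disp_t) (P : finPOrderType d) (R : comPzRingType).

Definition chain3 (t : P * P * P) : bool := ((t.1.1 <= t.1.2) && (t.1.2 <= t.2))%O.
Definition P3le := {t : P * P * P | chain3 t}.

Local Notation I3 := {ffun P3le -> R^o}.

(* value of f at (x,y,z), or 0 if (x,y,z) is not in P^3_<= (only used
   inside the product, where the triple is always in P^3_<=) *)
Definition at3 (f : I3) (x y z : P) : R :=
  if insub (x, y, z) is Some t then f t else 0.

Definition mul3 (f g : I3) : I3 :=
  [ffun t : P3le =>
     let: (x1, x2, x3) := val t in
     \sum_(y1 : P) \sum_(y2 : P)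
        (if [&& (x1 <= y1)%O, (y1 <= x2)%O, (x2 <= y2)%O & (y2 <= x3)%O]
         then at3 f x1 y1 y2 * at3 g y1 y2 x3 else 0)].

Definition e3 (x y z : P) : I3 := [ffun t : P3le => if val t == (x, y, z) then 1 else 0].

Definition is_derivation (D : I3 -> I3) : Prop :=
  (forall (a : R) (f g : I3), D (a *: f + g) = a *: D f + D g) /\
  (forall f g : I3, D (mul3 f g) = mul3 (D f) g + mul3 f (D g)).

End I3.

Notation I3 P R := {ffun P3le P -> R^o}.

(* Main.v *)
Require Import Defs.
From HB Require Import structures.
From mathcomp Require Import all_boot all_order all_algebra.
Set Implicit Arguments. Unset Strict Implicit. Unset Printing Implicit Defensive.
Import Order.TTheory GRing.Theory.
Local Open Scope order_scope.
Local Open Scope ring_scope.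

Section Helpers.
Variables (d : Order.disp_t) (P : finPOrderType d) (R : comPzRingType).
Local Notation I := (I3 P R).
Local Open Scope order_scope.

Lemma at3E (f : I) (t : P3le P) : f t = at3 f (val t).1.1 (val t).1.2 (val t).2.
Proof. by rewrite /at3 -!surjective_pairing valK. Qed.

Lemma at3_nc (f : I) (p q r : P) : ~~ ((p <= q) && (q <= r)) -> at3 f p q r = 0.
Proof. by move=> h; rewrite /at3 insubN. Qed.

Lemma at3_inj (f g : I) : (forall p q r, at3 f p q r = at3 g p q r) -> f = g.
Proof. by move=> h; apply/ffunP => t; rewrite !at3E h. Qed.

Lemma at3_add (f g : I) (p q r : P) : at3 (f + g) p q r = at3 f p q r + at3 g p q r.
Proof. by rewrite /at3; case: insub => [t|]; rewrite ?ffunE ?addr0. Qed.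

Lemma at3_0 (p q r : P) : at3 (0 : I) p q r = 0.
Proof. by rewrite /at3; case: insub => [t|]; rewrite ?ffunE. Qed.

Lemma at3_sum (T : Type) (s : seq T) (Q : pred T) (F : T -> I) (p q r : P) :
  at3 (\sum_(i <- s | Q i) F i) p q r = \sum_(i <- s | Q i) at3 (F i) p q r.
Proof.
by apply: (big_morph (fun f : I => at3 f p q r)) => [f g|]; rewrite ?at3_add ?at3_0.
Qed.

Lemma at3_e (a b c p q r : P) : (a <= b) && (b <= c) ->
  at3 (e3 R a b c) p q r = if (p, q, r) == (a, b, c) then 1 else 0.
Proof.
move=> hc; rewrite /at3; case: insubP => [t _ vt | nc]; first by rewrite ffunE vt.
case: eqP => // E; move: nc; by rewrite E /chain3 /= hc.
Qed.

Lemma at3_mul (f g : I) (p q r : P) : at3 (mul3 f g) p q r =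
  if (p <= q) && (q <= r) then
   \sum_(y1 : P) \sum_(y2 : P)
        (if [&& (p <= y1)%O, (y1 <= q)%O, (q <= y2)%O & (y2 <= r)%O]
         then at3 f p y1 y2 * at3 g y1 y2 r else 0)
  else 0.
Proof.
rewrite {1}/at3; case: insubP => [t ch vt | nc].
  have -> : (p <= q) && (q <= r) = true by exact: ch.
  by rewrite ffunE vt.
by have -> : (p <= q) && (q <= r) = false by exact: (negbTE nc).
Qed.

Lemma sum2_point (H : P -> P -> R) (a b : P) :
  (forall y1 y2, (y1 != a) || (y2 != b) -> H y1 y2 = 0) ->
  \sum_y1 \sum_y2 H y1 y2 = H a b.
Proof.
move=> h; rewrite (bigD1 a) //=.
rewrite [X in _ + X]big1 ?addr0; last first.
  by move=> y1 ne; apply: big1 => y2 _; apply: h; rewrite ne.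
rewrite (bigD1 b) //= [X in _ + X]big1 ?addr0 // => y2 ne; apply: h; by rewrite ne orbT.
Qed.

Lemma L1 (f : I) (a b c p q r : P) : a <= b -> b <= c ->
  at3 (mul3 f (e3 R a b c)) p q r =
  if (p <= q) && (q <= r) then
    (if [&& r == c, a <= q & q <= b] then at3 f p a b else 0) else 0.
Proof.
move=> hab hbc; have hc : (a <= b) && (b <= c) by rewrite hab hbc.
rewrite at3_mul; case: ifP => // hpqr.
rewrite (@sum2_point _ a b); last first.
  move=> y1 y2 hne; rewrite at3_e //; case: eqP => [[E1 E2 _]|_].
    by move: hne; rewrite E1 E2 !eqxx.
  by rewrite mulr0 if_same.
rewrite at3_e //; case: (r =P c) => [->|ne].
  rewrite eqxx mulr1 hbc andbT /=.
  case: (boolP (p <= a)) => hpa //=.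
  by case: ifP => _ //; rewrite at3_nc // negb_and hpa.
have -> : ((a, b, r) == (a, b, c)) = false by apply/eqP; case.
by rewrite mulr0 if_same.
Qed.

Lemma L2 (g : I) (a b c p q r : P) : a <= b -> b <= c ->
  at3 (mul3 (e3 R a b c) g) p q r =
  if (p <= q) && (q <= r) then
    (if [&& p == a, b <= q & q <= c] then at3 g b c r else 0) else 0.
Proof.
move=> hab hbc; have hc : (a <= b) && (b <= c) by rewrite hab hbc.
rewrite at3_mul; case: ifP => // hpqr.
rewrite (@sum2_point _ b c); last first.
  move=> y1 y2 hne; rewrite at3_e //; case: eqP => [[_ E1 E2]|_].
    by move: hne; rewrite E1 E2 !eqxx.
  by rewrite mul0r if_same.
rewrite at3_e //; case: (p =P a) => [->|ne].
  rewrite eqxx mul1r hab /=.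
  case: (boolP (c <= r)) => hcr; first by rewrite andbT.
  rewrite !andbF /=; case: ifP => _ //; by rewrite at3_nc // negb_and hcr orbT.
have -> : ((p, b, c) == (a, b, c)) = false by apply/eqP; case.
by rewrite mul0r if_same.
Qed.

End Helpers.

Section Der.
Variables (d : Order.disp_t) (P : finPOrderType d) (R : comPzRingType).
Local Notation I := (I3 P R).
Variable D : I -> I.
Hypothesis hD : is_derivation D.
Local Open Scope order_scope.

Lemma Dadd (f g : I) : D (f + g) = D f + D g.
Proof. by have := hD.1 1 f g; rewrite !scale1r. Qed.

Lemma D0 : D 0 = 0.
Proof.
have := Dadd 0 0; rewrite addr0 => h.
by apply: (@addrI _ (D 0)); rewrite addr0 -h.
Qed.

Lemma Dsum (T : Type) (s : seq T) (Q : pred T) (F : T -> I) :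
  D (\sum_(i <- s | Q i) F i) = \sum_(i <- s | Q i) D (F i).
Proof. exact: (big_morph D Dadd D0). Qed.

Lemma Dmul (f g : I) : D (mul3 f g) = mul3 (D f) g + mul3 f (D g).
Proof. exact: hD.2. Qed.

Lemma prod_single (a b c : P) : a <= b -> b <= c ->
  mul3 (e3 R a b b) (e3 R b b c) = e3 R a b c.
Proof.
move=> hab hbc; apply: at3_inj => p q r.
rewrite L1 ?le_refl // at3_e ?hab ?hbc ?le_refl // at3_e ?hab ?hbc //.
case: (boolP ((p, q, r) == (a, b, c))) => [/eqP[-> -> ->]|ne].
  by rewrite hab hbc !le_refl !eqxx.
case: ifP => // _; case: ifP => // /and3P[/eqP Er hbq hqb].
have Eq : q = b by apply/le_anti; rewrite hbq hqb.
rewrite Eq Er in ne.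
have -> : ((p, b, b) == (a, b, b)) = false.
  by apply/negbTE; apply: contra ne; rewrite !xpair_eqE !eqxx !andbT.
done.
Qed.

Lemma support (a b c p q r : P) : a <= b -> b <= c -> q != b ->
  at3 (D (e3 R a b c)) p q r = 0.
Proof.
move=> hab hbc hq.
have nb : (b <= q) && (q <= b) = false.
  apply/negbTE; apply: contra hq => h; apply/eqP/le_anti; by rewrite andbC.
rewrite -(prod_single hab hbc) Dmul at3_add L1 ?le_refl // L2 ?le_refl //.
by rewrite nb !andbF /=; case: ifP => _; rewrite addr0.
Qed.

Lemma diag (a c : P) : a < c ->
  at3 (D (e3 R a a c)) a a c = 0 /\ at3 (D (e3 R a c c)) a c c = 0.
Proof.
move=> hlt; have hac : a <= c by apply: ltW.
have nac : a != c by rewrite lt_neqAle in hlt; case/andP: hlt.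
set T := mul3 (e3 R a a c) (e3 R a c c).
have Tsum : T = \sum_(w : P | (a <= w) && (w <= c)) e3 R a w c.
  apply: at3_inj => p q r; rewrite L1 ?le_refl // at3_sum at3_e ?le_refl ?hac //.
  rewrite (eq_bigr (fun w => if (p, q, r) == (a, w, c) then 1 else 0)); last first.
    by move=> w /andP[h1 h2]; rewrite at3_e ?h1 ?h2.
  case: (boolP ((a <= q) && (q <= c))) => hq.
    rewrite (bigD1 q) //= big1 ?addr0; last first.
      move=> w /andP[_ nw]; rewrite !xpair_eqE [q == w]eq_sym (negbTE nw).
      by rewrite andbF andFb.
    rewrite !xpair_eqE !eqxx !andbT.
    case/andP: hq => h1 h2; case: (p =P a) => [->|_]; case: (r =P c) => [->|_];
      rewrite /= ?h1 ?h2 ?andbF ?andbT //=; by case: ifP.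
  rewrite big1; last first.
    move=> w hw; case: eqP => // -[_ Eq _]; by rewrite Eq hw in hq.
  by rewrite andbF /=; case: ifP.
set al := at3 (D (e3 R a a c)) a a c.
set be := at3 (D (e3 R a c c)) a c c.
have H1 : at3 (D T) a a c = al + be.
  by rewrite /T Dmul at3_add L1 ?le_refl // L2 ?le_refl // hac !eqxx.
have H2 : at3 (D T) a a c = al.
  rewrite Tsum Dsum at3_sum (bigD1 a) /= ?le_refl ?hac // big1 ?addr0 //.
  move=> w /andP[/andP[h1 h2] nw]; apply: support => //; by rewrite eq_sym.
have H3 : at3 (D T) a c c = al + be.
  by rewrite /T Dmul at3_add L1 ?le_refl // L2 ?le_refl // hac !eqxx.
have H4 : at3 (D T) a c c = be.
  rewrite Tsum Dsum at3_sum (bigD1 c) /= ?le_refl ?hac // big1 ?addr0 //.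
  move=> w /andP[/andP[h1 h2] nw]; apply: support => //; by rewrite eq_sym.
split.
  by apply: (@addIr _ be); rewrite add0r -H3 H4.
by apply: (@addrI _ al); rewrite addr0 -H1 H2.
Qed.

Lemma offA (x z p : P) : x <= z -> p != x ->
  at3 (D (e3 R x z z)) p z z = 0.
Proof.
move=> hxz hpx.
case: (boolP (p <= z)) => hpz; last by rewrite at3_nc // negb_and hpz.
set h := e3 R p p z.
have h0 : mul3 h (e3 R x z z) = 0.
  apply: at3_inj => q1 q2 q3; rewrite at3_0 L2 ?le_refl // at3_e ?hxz ?le_refl //.
  have -> : ((p, z, q3) == (x, z, z)) = false by rewrite !xpair_eqE (negbTE hpx).
  by case: ifP => _ //; case: ifP.
have := congr1 D h0; rewrite Dmul D0 => /(congr1 (fun f => at3 f p p z)).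
rewrite at3_add at3_0 L1 ?le_refl // L2 ?le_refl // hpz eqxx /=.
rewrite eqxx !andbT.
case: (boolP (x <= p)) => hxp /=; first last.
  by rewrite add0r.
rewrite (@at3_nc _ _ _ (D h) p x z) ?add0r // negb_and.
apply/orP; left; apply: contra hpx => hpx'; apply/eqP/le_anti; by rewrite hpx'.
Qed.

Lemma offB (z y r : P) : z <= y -> r != y ->
  at3 (D (e3 R z z y)) z z r = 0.
Proof.
move=> hzy hry.
case: (boolP (z <= r)) => hzr; last by rewrite at3_nc // negb_and hzr orbT.
set h := e3 R z r r.
have h0 : mul3 (e3 R z z y) h = 0.
  apply: at3_inj => q1 q2 q3; rewrite at3_0 L1 ?le_refl // at3_e ?hzy ?le_refl //.
  have -> : ((q1, z, r) == (z, z, y)) = false by rewrite !xpair_eqE (negbTE hry) andbF.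
  by case: ifP => _ //; case: ifP.
have := congr1 D h0; rewrite Dmul D0 => /(congr1 (fun f => at3 f z r r)).
rewrite at3_add at3_0 L1 ?le_refl // L2 ?le_refl // hzr eqxx /=.
rewrite eqxx /=.
case: (boolP (r <= y)) => hry' /=; first last.
  by rewrite addr0.
rewrite (@at3_nc _ _ _ (D h) z y r) ?addr0 // negb_and.
apply/orP; right; apply: contra hry => hyr; apply/eqP/le_anti; by rewrite hry' hyr.
Qed.

End Der.

Theorem corollary4p6 (d : Order.disp_t) (P : finPOrderType d) (R : comPzRingType)
  (D : I3 P R -> I3 P R) :
  is_derivation D ->
  forall x z y : P, (x < z)%O -> (z < y)%O -> D (e3 R x z y) = 0.
Proof.
move=> hD x z y hxz hzy.
have lxz : (x <= z)%O by apply: ltW.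
have lzy : (z <= y)%O by apply: ltW.
have G1 : forall p, at3 (D (e3 R x z z)) p z z = 0.
  move=> p; case: (p =P x) => [->|/eqP ne]; first exact: (diag hD hxz).2.
  exact: offA.
have G2 : forall r, at3 (D (e3 R z z y)) z z r = 0.
  move=> r; case: (r =P y) => [->|/eqP ne]; first exact: (diag hD hzy).1.
  exact: offB.
apply: at3_inj => p q r.
rewrite at3_0 -(prod_single R lxz lzy) (Dmul hD) at3_add L1 ?lexx // L2 ?lexx //.
rewrite G1 G2.
by case: ifP => _; rewrite ?addr0 //; case: ifP => _; case: ifP => _; rewrite ?addr0.
Qed.
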